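(* Let $\bar A=\{z\in\mathbb{C}:\operatorname{Re}z\ge0\}$. Let $Q_0$ be a function holomorphic in $\bar A$ and $Q_1$ a polynomial in one complex variable. If $Q_0(w)+vQ_1(w)\ne0$ for all $v,w\in\bar A$, then $Q_0(z)+Q_1'(z)\ne0$ for all $z\in\bar A$. *)

(* Defs.v *)
From Stdlib Require Import Reals.
From Coquelicot Require Import Coquelicot.
Open Scope R_scope.

Definition closed_rhp (z : C) : Prop := 0 <= Re z.

Definition holomorphic_on_closed_rhp (f : C -> C) : Prop :=
  exists U : C -> Prop, open U /\ (forall z, closed_rhp z -> U z) /\
    (forall z, U z -> @ex_derive C_AbsRing C_NormedModule f z).

Definition is_Cpoly (p : C -> C) : Prop :=
  exists (n : nat) (a : nat -> C),
    forall z : C, p z = sum_n (fun k => Cmult (a k) (pow_n z k)) n.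

(* Main.v *)
Require Import Defs.
From Stdlib Require Import Reals.
From Coquelicot Require Import Coquelicot.
From Stdlib Require Import Lra Psatz.
From mathcomp Require Import all_boot all_order all_algebra.
From mathcomp Require Import Rstruct complex.
Import Order.TTheory GRing.Theory Num.Theory.

Notation K := (Rdefinitions.R[i]).
Definition toK (c : C) : K := Complex (fst c) (snd c).
Definition fromK (x : K) : C := (complex.Re x, complex.Im x).

Lemma toKK x : fromK (toK x) = x. Proof. by case: x. Qed.
Lemma fromKK x : toK (fromK x) = x. Proof. by case: x. Qed.
Lemma toK_inj x y : toK x = toK y -> x = y.
Proof. by move=> h; rewrite -(toKK x) h toKK. Qed.

Section S.
Local Open Scope ring_scope.
Local Open Scope complex_scope.
Lemma toK_plus x y : toK (Cplus x y) = toK x + toK y.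
Proof. by case: x => a b; case: y => c d. Qed.
Lemma toK_mult x y : toK (Cmult x y) = toK x * toK y.
Proof. by case: x => a b; case: y => c d. Qed.
Lemma toK_opp x : toK (Copp x) = - toK x.
Proof. by case: x => a b. Qed.
Lemma toK_R r : toK (RtoC r) = r%:C.
Proof. by []. Qed.
Lemma toK_pow x n : toK (pow_n x n) = toK x ^+ n.
Proof. elim: n => [|n IH] //=. by rewrite exprS -IH -toK_mult. Qed.
Lemma invcE (c d : Rdefinitions.R) : (c +i* d)^-1 = (c / (c^+2 + d^+2)) +i* (- (d / (c^+2 + d^+2))).
Proof. by []. Qed.
Lemma cReD (x y : K) : complex.Re (x + y) = complex.Re x + complex.Re y.
Proof. by case: x; case: y. Qed.
End S.

Lemma cvA f z l : @is_derive C_AbsRing C_NormedModule f z l -> @is_derive C_AbsRing (AbsRing_NormedModule C_AbsRing) f z l.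
Proof. intros [H1 H2]. split.
- destruct H1 as [a b [M [HM HMM]]]. split. exact a. exact b. exists M. split. exact HM.
  intros x. exact (HMM x).
- intros x Hx eps. exact (H2 x Hx eps).
Qed.
Lemma cvB f z l : @is_derive C_AbsRing (AbsRing_NormedModule C_AbsRing) f z l -> @is_derive C_AbsRing C_NormedModule f z l.
Proof. intros [H1 H2]. split.
- destruct H1 as [a b [M [HM HMM]]]. split. exact a. exact b. exists M. split. exact HM.
  intros x. exact (HMM x).
- intros x Hx eps. exact (H2 x Hx eps).
Qed.

Section S.
Local Open Scope ring_scope.
Local Open Scope complex_scope.
Lemma poly_deriveA (q : {poly K}) z :
  @is_derive C_AbsRing (AbsRing_NormedModule C_AbsRing) (fun w : C => fromK q.[toK w]) z (fromK q^`().[toK z]).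
Proof.
elim/poly_ind: q => [|q c IH].
  rewrite deriv0 horner0.
  apply: (is_derive_ext (fun _ => Hierarchy.zero)); first by move=> t; rewrite horner0.
  exact: (@is_derive_const C_AbsRing (AbsRing_NormedModule C_AbsRing)).
have H1 := is_derive_plus _ _ _ _ _ (is_derive_mult _ _ _ _ _ IH (is_derive_id z) Cmult_comm)
   (@is_derive_const C_AbsRing (AbsRing_NormedModule C_AbsRing) (fromK c) z).
have -> : fromK (q * 'X + c%:P)^`().[toK z] = Hierarchy.plus (Hierarchy.plus (Hierarchy.mult (fromK q^`().[toK z]) z) (Hierarchy.mult (fromK q.[toK z]) Hierarchy.one)) Hierarchy.zero.
  apply: toK_inj. rewrite derivMXaddC. 
  change (toK (fromK (q + q^`() * 'X).[toK z]) = toK (Cplus (Cplus (Cmult (fromK q^`().[toK z]) z) (Cmult (fromK q.[toK z]) (RtoC 1))) (RtoC 0))).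
  rewrite !toK_plus !toK_mult !fromKK !toK_R hornerD hornerM hornerX.
  rewrite mulr1 addr0 addrC. done.
apply: is_derive_ext H1 => t.
apply: toK_inj.
change (toK (Cplus (Cmult (fromK q.[toK t]) t) (fromK c)) = toK (fromK (q * 'X + c%:P).[toK t])).
by rewrite toK_plus toK_mult !fromKK hornerMXaddC.
Qed.
Lemma poly_derive (q : {poly K}) z :
  @is_derive C_AbsRing C_NormedModule (fun w : C => fromK q.[toK w]) z (fromK q^`().[toK z]).
Proof. exact: cvB (poly_deriveA q z). Qed.
Lemma poly_cont (q : {poly K}) z :
  @continuous C_UniformSpace C_UniformSpace (fun w : C => fromK q.[toK w]) z.
Proof. Abort.
End S.

Section R3.
Local Open Scope R_scope.
Lemma contS (A B : C -> C) z : @ex_derive C_AbsRing C_NormedModule A z ->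
  @ex_derive C_AbsRing C_NormedModule B z ->
  @continuous (AbsRing_UniformSpace C_AbsRing) R_UniformSpace (fun w => fst (A w) * fst (B w) + snd (A w) * snd (B w)) z.
Proof.
move=> HA0 HB0. have HA := ex_derive_continuous A z HA0. have HB := ex_derive_continuous B z HB0.
have H1 : @continuous (AbsRing_UniformSpace C_AbsRing) R_UniformSpace (fun w => fst (A w)) z.
{ apply: continuous_comp. exact HA. case: (A z) => a b. exact (continuous_fst a b). }
have H2 : @continuous (AbsRing_UniformSpace C_AbsRing) R_UniformSpace (fun w => snd (A w)) z.
{ apply: continuous_comp. exact HA. case: (A z) => a b. exact (continuous_snd a b). }
have H3 : @continuous (AbsRing_UniformSpace C_AbsRing) R_UniformSpace (fun w => fst (B w)) z.
{ apply: continuous_comp. exact HB. case: (B z) => a b. exact (continuous_fst a b). }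
have H4 : @continuous (AbsRing_UniformSpace C_AbsRing) R_UniformSpace (fun w => snd (B w)) z.
{ apply: continuous_comp. exact HB. case: (B z) => a b. exact (continuous_snd a b). }
exact: (continuous_plus _ _ _ (continuous_mult _ _ _ H1 H3) (continuous_mult _ _ _ H2 H4)).
Qed.

Lemma Cshift (z w : C) : Cplus (Cplus z w) (Copp z) = w.
Proof. case: z => a b; case: w => c e. rewrite /Cplus /Copp /=. f_equal; ring. Qed.

Lemma core (A B : C -> C) z u : @ex_derive C_AbsRing C_NormedModule A z ->
  @ex_derive C_AbsRing C_NormedModule B z ->
  A z = Copp (B z) -> B z <> RtoC 0 -> 0 <= fst z -> (0 < fst z \/ 0 <= fst u) ->
  exists t, 0 < t /\ 0 <= fst (Cplus z (Cmult (RtoC t) u)) /\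
    let w := Cplus z (Cmult (RtoC t) u) in
    fst (A w) * fst (B w) + snd (A w) * snd (B w) < 0.
Proof.
move=> HA HB Hz HB0 Hz0 Hc.
have HS := contS A B z HA HB.
set S := (fun w => _) in HS.
have HSz : S z < 0.
{ rewrite /S Hz. case: (B z) HB0 => a b /= Hab.
  have : a <> 0 \/ b <> 0.
  { case: (Req_dec a 0) => [Ha|]; last by left. case: (Req_dec b 0) => [Hb|]; last by right.
    by exfalso; apply: Hab; rewrite Ha Hb. }
  case => h; [have := Rsqr_pos_lt a h | have := Rsqr_pos_lt b h]; rewrite /Rsqr;
  nra. }
have Hloc : locally (S z) (fun r => r < 0).
{ exists (mkposreal _ (Ropp_0_gt_lt_contravar _ HSz)) => y /=.
  rewrite /ball /= /AbsRing_ball /abs /=.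
  move=> h. have h2 : Rabs (y - S z) < - S z := h. have := Rabs_def2 _ _ h2. lra. }
have [d Hd] := HS _ Hloc.
have key : forall t, 0 < t -> t * Cmod u < d -> S (Cplus z (Cmult (RtoC t) u)) < 0.
{ move=> t t0 td. apply: Hd.
  rewrite /ball /= /AbsRing_ball /abs /= /minus /plus /opp /=.
  have -> : Cplus (Cplus z (Cmult (RtoC t) u)) (Copp z) = Cmult (RtoC t) u.
  { by rewrite Cshift. }
  rewrite Cmod_mult Cmod_R Rabs_pos_eq //; lra. }
have Hu := Cmod_ge_0 u.
have Hre := re_le_Cmod u.
have Hd0 := cond_pos d.
case: Hc => Hc.
- set r := Rmin d (fst z).
  have r0 : 0 < r by apply: Rmin_pos.
  have rd : r <= d by apply: Rmin_l.
  have rz : r <= fst z by apply: Rmin_r.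
  exists (r / (2 * (Cmod u + 1))).
  have t0 : 0 < r / (2 * (Cmod u + 1)) by apply: Rdiv_lt_0_compat; lra.
  have tu : r / (2 * (Cmod u + 1)) * Cmod u < r.
  { apply: (Rle_lt_trans _ (r / (2 * (Cmod u + 1)) * (2 * (Cmod u + 1))/2)).
    - rewrite /Rdiv. nra.
    - field_simplify; lra. }
  split; first exact t0. split; last by apply: key => //; lra.
  rewrite /Cplus /Cmult /RtoC /=.
  have : Rabs (fst u) <= Cmod u by [].
  move/Rabs_le_between => [h1 h2]. nra.
- exists (d / (2 * (Cmod u + 1))).
  have t0 : 0 < d / (2 * (Cmod u + 1)) by apply: Rdiv_lt_0_compat; lra.
  have tu : d / (2 * (Cmod u + 1)) * Cmod u < d.
  { apply: (Rle_lt_trans _ (d / (2 * (Cmod u + 1)) * (2 * (Cmod u + 1))/2)).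
    - rewrite /Rdiv. nra.
    - field_simplify; lra. }
  split; first exact t0. split; last by apply: key.
  rewrite /Cplus /Cmult /RtoC /=. nra.
Qed.

End R3.

From mathcomp Require Import ring lra.

Section S4.
Local Open Scope ring_scope.
Local Open Scope complex_scope.
Lemma cReM (x y : K) : complex.Re (x * y) = complex.Re x * complex.Re y - complex.Im x * complex.Im y.
Proof. by case: x => a b; case: y => c d. Qed.
Lemma cImM (x y : K) : complex.Im (x * y) = complex.Re x * complex.Im y + complex.Im x * complex.Re y.
Proof. by case: x => a b; case: y => c d. Qed.
Lemma cReV (y : K) : complex.Re (y^-1) = complex.Re y / (complex.Re y ^+ 2 + complex.Im y ^+ 2).
Proof. by case: y => c d. Qed.
Lemma cImV (y : K) : complex.Im (y^-1) = - (complex.Im y / (complex.Re y ^+ 2 + complex.Im y ^+ 2)).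
Proof. by case: y => c d. Qed.
Lemma cRe_div (x y : K) : complex.Re (x / y) = (complex.Re x * complex.Re y + complex.Im x * complex.Im y) / (complex.Re y ^+ 2 + complex.Im y ^+ 2).
Proof. rewrite cReM cReV cImV. rewrite !mulrA mulrN opprK mulrDl -!mulrA. by []. Qed.
Lemma cReRC (x : K) (r : Rdefinitions.R) : complex.Re (x * r%:C) = complex.Re x * r.
Proof. by rewrite cReM /= mulr0 subr0. Qed.
Lemma RC_inv (r : Rdefinitions.R) : (r%:C)^-1 = (r^-1)%:C :> K.
Proof. by rewrite fmorphV. Qed.
End S4.
Section S2.
Local Open Scope ring_scope.
Local Open Scope complex_scope.
Lemma normK_gt0 (y : K) : y != 0 -> 0 < complex.Re y ^+ 2 + complex.Im y ^+ 2.
Proof.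
case: y => c d; rewrite eq_complex /= negb_and => h.
case/orP: h => h.
- apply: (@lt_le_trans _ _ (c ^+ 2)); first by rewrite lt0r sqrf_eq0 h sqr_ge0.
  by rewrite lerDl sqr_ge0.
- apply: (@lt_le_trans _ _ (d ^+ 2)); first by rewrite lt0r sqrf_eq0 h sqr_ge0.
  by rewrite lerDr sqr_ge0.
Qed.
End S2.

Section S5.
Local Open Scope ring_scope.
Local Open Scope complex_scope.

Lemma LOC (Q0 Q1 : C -> C)
 (H : forall v w : C, closed_rhp v -> closed_rhp w -> Cplus (Q0 w) (Cmult v (Q1 w)) <> RtoC 0)
 (z u : C) (m : nat) (q : {poly K}) :
 @ex_derive C_AbsRing C_NormedModule Q0 z -> Q0 z <> RtoC 0 ->
 Rle 0 (fst z) -> (Rlt 0 (fst z) \/ Rle 0 (fst u)) ->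
 (forall w, Q1 w = fromK ((toK w - toK z)^+m * q.[toK w])) ->
 toK (Q0 z) = - (toK u ^+ m * q.[toK z]) -> False.
Proof.
move=> HQ0 Q0nz Hz Hc HQ1 HQz.
pose qb := (toK u ^+ m)%:P * q.
pose B := fun w => fromK qb.[toK w].
have HB : @ex_derive C_AbsRing C_NormedModule B z by exists (fromK qb^`().[toK z]); exact: poly_derive.
have HAB : Q0 z = Copp (B z).
  by apply: toK_inj; rewrite toK_opp /B fromKK hornerCM HQz.
have HB0 : B z <> RtoC 0.
  move=> h; apply: Q0nz; rewrite HAB h; apply: toK_inj; by rewrite toK_opp toK_R oppr0.
have [t [t0 [Hw HS]]] := core Q0 B z u HQ0 HB HAB HB0 Hz Hc.
move: HS; set w := Cplus z (Cmult (RtoC t) u) => /= HS.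
set a := toK (Q0 w). set b := toK (B w).
have Sa : complex.Re a * complex.Re b + complex.Im a * complex.Im b < 0 by apply/RltP.
have b0 : b != 0.
  apply/negP => /eqP hb. move: Sa; rewrite hb /= !mulr0 addr0. by rewrite ltxx.
have t0' : (0 < t)%R by apply/RltP.
pose T := (t%:C)^+m : K.
have T0 : T != 0 by rewrite expf_neq0 // eq_complex /= negb_and (gt_eqF t0').
pose vK := (- a / b) / T.
apply: (H (fromK vK) w) => //.
- rewrite /closed_rhp /=. apply/RleP.
  rewrite /vK /T -rmorphXn RC_inv cReRC (cRe_div (-a) b).
  have nb := normK_gt0 b b0.
  apply: divr_ge0; last by rewrite exprn_ge0 // ltW.
  apply: divr_ge0; last exact: ltW.
  rewrite /=. move: Sa => /= Sa. lra.
- apply: toK_inj. rewrite toK_plus toK_mult fromKK HQ1 fromKK toK_R.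
  have hb : b = toK u ^+ m * q.[toK w] by rewrite /b /B fromKK hornerCM.
  move: hb; set qw := q.[toK w] => hb.
  have Hwz : toK w = toK z + t%:C * toK u by rewrite /w toK_plus toK_mult toK_R.
  rewrite Hwz [toK z + _]addrC addrK exprMn -/T -/a -[T * _ * qw]mulrA -hb /vK.
  change ((0%R)%:C) with (0 : K).
  by rewrite mulrA divfK // divfK // subrr.
Qed.
End S5.

Section S7.
Local Open Scope ring_scope.
Local Open Scope complex_scope.
Lemma cReB (x y : K) : complex.Re (x - y) = complex.Re x - complex.Re y.
Proof. by case: x; case: y. Qed.
Lemma cReDD (x y : K) : complex.Re (x + y) = complex.Re x + complex.Re y.
Proof. by case: x; case: y. Qed.

Lemma logderiv (n : nat) : forall (p : {poly K}) (x : K), (size p <= n)%N ->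
  (forall r, root p r -> complex.Re r <= 0) -> p.[x] != 0 -> 0 <= complex.Re x ->
  0 <= complex.Re (p^`().[x] / p.[x]).
Proof.
elim: n => [|n IH] p x Hs Hr Hx Hx0.
  by move: Hx; rewrite leqn0 size_poly_eq0 in Hs; rewrite (eqP Hs) horner0 eqxx.
case: (leqP (size p) 1) => Hp.
  by rewrite (size1_polyC Hp) derivC horner0 mul0r.
have : size p != 1%N by rewrite gtn_eqF.
case/closed_rootP => r /factor_theorem [q Hq].
have Hqx : q.[x] != 0 by move: Hx; rewrite Hq hornerM mulf_eq0 negb_or => /andP [].
have Hxr : x - r != 0 by move: Hx; rewrite Hq hornerM hornerXsubC mulf_eq0 negb_or => /andP [].
have q0 : q != 0 by apply/eqP => h; move: Hqx; rewrite h horner0 eqxx.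
have Hsq : (size q <= n)%N.
  by move: Hs; rewrite Hq size_Mmonic ?monicXsubC // size_XsubC addn2 /=.
have Hrq : forall r', root q r' -> complex.Re r' <= 0.
  by move=> r' hr'; apply: Hr; rewrite Hq rootM hr'.
have IHq := IH q x Hsq Hrq Hqx Hx0.
have -> : p^`().[x] / p.[x] = q^`().[x] / q.[x] + (x - r)^-1.
  rewrite Hq derivM derivXsubC hornerD !hornerM hornerXsubC hornerC.
  field. by rewrite Hqx Hxr.
rewrite cReDD; apply: addr_ge0 => //.
rewrite cReV; apply: divr_ge0.
  by rewrite cReB subr_ge0; apply: (le_trans (Hr r _) Hx0); rewrite Hq rootM root_XsubC eqxx orbT.
by apply: ltW; apply: normK_gt0.
Qed.
End S7.

Section S8.
Local Open Scope ring_scope.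
Local Open Scope complex_scope.

Lemma toK_sum (f : nat -> C) n : toK (sum_n f n) = \sum_(k < n.+1) toK (f k).
Proof.
elim: n => [|n IH]; first by rewrite sum_O big_ord_recr big_ord0 /= add0r.
by rewrite sum_Sn big_ord_recr /= -IH; apply: toK_plus.
Qed.

Lemma crhpE z : closed_rhp z <-> Rle 0 (fst z).
Proof. by []. Qed.

Lemma roots_lhp (Q0 Q1 : C -> C) (p : {poly K})
 (H : forall v w : C, closed_rhp v -> closed_rhp w -> Cplus (Q0 w) (Cmult v (Q1 w)) <> RtoC 0)
 (Hd : forall w, Rle 0 (fst w) -> @ex_derive C_AbsRing C_NormedModule Q0 w)
 (Hnz : forall w, Rle 0 (fst w) -> Q0 w <> RtoC 0)
 (HQ1p : forall w, Q1 w = fromK p.[toK w]) :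
 p != 0 -> forall r, root p r -> complex.Re r <= 0.
Proof.
move=> p0 r hr. rewrite leNgt; apply/negP => Hr.
have [m [q hq Hpq]] := multiplicity_XsubC p r.
move: hq; rewrite p0 /= => hq.
have m0 : (0 < m)%N.
  rewrite lt0n; apply/negP => /eqP m0; move: hr; rewrite Hpq m0 expr0 mulr1.
  by move/negP: hq.
have hqr : q.[r] != 0 by exact: hq.
pose a := - toK (Q0 (fromK r)) / q.[r].
have : size ('X^m - a%:P) != 1%N by rewrite size_XnsubC // gtn_eqF // ltnS.
case/closed_rootP => u; rewrite rootE !hornerE subr_eq0 => /eqP hu.
have Hr0 : Rle 0 (fst (fromK r)) by apply/RleP; exact: ltW.
apply: (LOC Q0 Q1 H (fromK r) (fromK u) m q (Hd _ Hr0) (Hnz _ Hr0) Hr0).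
- by left; apply/RltP.
- move=> w; rewrite HQ1p fromKK Hpq hornerM horner_exp hornerXsubC mulrC.
  by [].
- rewrite !fromKK hu /a divfK // opprK //.
Qed.

End S8.

Section S9.
Local Open Scope ring_scope.
Local Open Scope complex_scope.

Lemma main_aux (Q0 Q1 : C -> C) :
  holomorphic_on_closed_rhp Q0 ->
  is_Cpoly Q1 ->
  (forall v w : C, closed_rhp v -> closed_rhp w -> Cplus (Q0 w) (Cmult v (Q1 w)) <> RtoC 0) ->
  forall (z d : C), closed_rhp z ->
    @is_derive C_AbsRing C_NormedModule Q1 z d ->
    Cplus (Q0 z) d <> RtoC 0.
Proof.
move=> [U [_ [HU HUd]]] [n [a Ha]] H z d Hz Hd Heq.
have Hder : forall w, Rle 0 (fst w) -> @ex_derive C_AbsRing C_NormedModule Q0 w.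
  by move=> w hw; apply: HUd; apply: HU.
have Hnz : forall w, Rle 0 (fst w) -> Q0 w <> RtoC 0.
  move=> w hw h0; apply: (H (RtoC 0) w) => //.
  - by apply/crhpE; apply: Rle_refl.
  - rewrite h0; apply: toK_inj; rewrite toK_plus toK_mult !toK_R.
    by rewrite mul0r addr0.
pose p : {poly K} := \poly_(k < n.+1) toK (a k).
have HQ1p : forall w, Q1 w = fromK p.[toK w].
  move=> w; apply: toK_inj; rewrite fromKK Ha toK_sum horner_poly.
  by apply: eq_bigr => k _; rewrite toK_mult toK_pow.
have Hd2 : d = fromK p^`().[toK z].
  have h1 := is_C_derive_unique _ _ _ Hd.
  have h2 : @is_derive C_AbsRing C_NormedModule Q1 z (fromK p^`().[toK z]).
    apply: (is_derive_ext (fun w => fromK p.[toK w])); first by move=> w; rewrite HQ1p.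
    exact: poly_derive.
  by rewrite -h1 (is_C_derive_unique _ _ _ h2).
have HQz : toK (Q0 z) = - p^`().[toK z].
  apply/eqP; rewrite -subr_eq0 opprK -(fromKK (p^`().[toK z])) -Hd2 -toK_plus Heq.
  by [].
case: (boolP (root p (toK z))) => hroot.
- case/factor_theorem: hroot => q Hq.
  apply: (LOC Q0 Q1 H z (RtoC 1) 1 q (Hder _ Hz) (Hnz _ Hz) Hz).
  + by right; apply: Rle_0_1.
  + by move=> w; rewrite HQ1p Hq hornerM hornerXsubC expr1 mulrC.
  + rewrite HQz Hq derivM derivXsubC hornerD !hornerM hornerXsubC subrr mulr0 add0r.
    rewrite toK_R expr1 hornerC mulr1. by change ((1%R)%:C) with (1 : K); rewrite mul1r.
- have p0 : p != 0 by apply/eqP => h; move: hroot; rewrite h root0.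
  have Hr := roots_lhp Q0 Q1 p H Hder Hnz HQ1p p0.
  have hpz : p.[toK z] != 0 by exact: hroot.
  pose vK := p^`().[toK z] / p.[toK z].
  have Hv : 0 <= complex.Re vK.
    apply: (logderiv (size p)) => //. by apply/RleP.
  apply: (H (fromK vK) z) => //.
  + by apply/crhpE; apply/RleP.
  + apply: toK_inj; rewrite toK_plus toK_mult fromKK HQ1p fromKK HQz /vK divfK //.
    by rewrite addNr.
Qed.
End S9.

Theorem lemma2p1 (Q0 Q1 : C -> C) :
  holomorphic_on_closed_rhp Q0 ->
  is_Cpoly Q1 ->
  (forall v w : C, closed_rhp v -> closed_rhp w -> Cplus (Q0 w) (Cmult v (Q1 w)) <> RtoC 0) ->
  forall (z d : C), closed_rhp z ->
    @is_derive C_AbsRing C_NormedModule Q1 z d ->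
    Cplus (Q0 z) d <> RtoC 0.
Proof. exact: main_aux. Qed.
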